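(* Let $t\geq 2$ be an integer and $H=K_{t,t}$. Then there are a positive constant $c$ and an integer $n_0$ such that for every $n>n_0$, $$\mathrm{IR}(H, K_{1,n}) \leq n + c\, n^{1-\frac{1}{2t}}.$$
   Context: All graphs are finite and simple. $K_{t,t}$ is the complete bipartite graph with both parts of size $t$; $K_{1,n}$ is the star with $n$ edges. For graphs $F$, $H$, $G$, write $F \overset{\text{ind}}{\longrightarrow} (H,G)$ if for every coloring of the edges of $F$ with red and blue there is either a red induced copy of $H$ (a vertex set $S\subseteq V(F)$ with $F[S]\cong H$ and all edges of $F[S]$ red) or a blue induced copy of $G$ (defined analogously with blue). The induced Ramsey number $\mathrm{IR}(H,G)$ is the smallest number of vertices of a graph $F$ with $F \overset{\text{ind}}{\longrightarrow} (H,G)$. *)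

(* Defs.v *)
From mathcomp Require Import all_boot.
From Stdlib Require Import Reals.
Set Implicit Arguments. Unset Strict Implicit. Unset Printing Implicit Defensive.

Definition simple_graph (T : finType) (e : rel T) : Prop :=
  symmetric e /\ irreflexive e.

Definition induced_copy (T U : finType) (eF : rel T) (eH : rel U)
  (P : T -> T -> bool) : Prop :=
  exists f : U -> T, injective f /\
    (forall x y, eF (f x) (f y) = eH x y) /\
    (forall x y, eH x y -> P (f x) (f y)).

(* F -ind-> (H, G): every red/blue colouring of the edges of F (a symmetric
   colour function; its values on non-edges are irrelevant) has a red induced
   copy of H or a blue induced copy of G. col x y = true means red. *)
Definition ind_arrow (T U V : finType) (eF : rel T) (eH : rel U) (eG : rel V)
  : Prop :=
  forall col : T -> T -> bool, (forall x y, col x y = col y x) ->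
    induced_copy eF eH col \/ induced_copy eF eG (fun x y => ~~ col x y).

(* IR(H,G) <= m  iff  some graph on m vertices induced-arrows (H,G).
   (Equivalently some graph on at most m vertices, adding isolated vertices.) *)
Definition IR_le (U V : finType) (eH : rel U) (eG : rel V) (m : nat) : Prop :=
  exists eF : rel 'I_m, simple_graph eF /\ ind_arrow eF eH eG.

Definition Ktt_rel (t : nat) : rel ('I_t + 'I_t)%type :=
  fun x y => match x, y with
             | inl _, inr _ | inr _, inl _ => true
             | _, _ => false end.

Definition star_rel (n : nat) : rel (option 'I_n) :=
  fun x y => match x, y with
             | None, Some _ | Some _, None => true
             | _, _ => false end.
Arguments Ktt_rel t : clear implicits.
Arguments star_rel n : clear implicits.

(* Main.v *)
Require Import Defs.
From mathcomp Require Import all_boot.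
From mathcomp Require Import zify.
Set Implicit Arguments. Unset Strict Implicit. Unset Printing Implicit Defensive.


Lemma expn_mono m n e : m <= n -> m ^ e <= n ^ e.
Proof. by case: e => [|e] // h; rewrite leq_exp2r. Qed.

Lemma ffact_lb n m : (n.+1 - m)^m <= n^_m.
Proof.
elim: m n => [|m IH] n; first by rewrite expn0 ffactn0.
rewrite ffactnS; case: n => [|n]; first by rewrite subSS sub0n exp0n.
by rewrite /= expnS subSS; apply: leq_mul; [exact: leq_subr | exact: IH].
Qed.

Lemma ffact_ub n m : n^_m <= n^m.
Proof.
elim: m n => [|m IH] n; first by rewrite expn0 ffactn0.
rewrite ffactnS expnS; apply: leq_mul => //; apply: leq_trans (IH _) _.
by apply: expn_mono; rewrite leq_pred.
Qed.

Lemma kst (A B : finType) (R : B -> {set A}) (t K : nat) :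
  (forall b, K <= #|R b|) -> t.-1 * 'C(#|A|, t) < #|B| * 'C(K, t) ->
  exists S : {set A}, #|S| = t /\ t <= #|[set b | S \subset R b]|.
Proof.
move=> HK Hlt.
case: (boolP [exists S : {set A}, (#|S| == t) && (t <= #|[set b | S \subset R b]|)]).
  by case/existsP=> S /andP[/eqP h1 h2]; exists S.
rewrite negb_exists => /forallP Hn.
have E1 : \sum_(S : {set A} | #|S| == t) #|[set b | S \subset R b]|
          = \sum_(b : B) 'C(#|R b|, t).
  transitivity (\sum_(S : {set A} | #|S| == t) \sum_(b | S \subset R b) 1).
    by apply: eq_bigr => S _; rewrite sum1dep_card.
  rewrite (exchange_big_dep xpredT) //=.
  apply: eq_bigr => b _.
  rewrite -cards_draws sum1dep_card; apply: eq_card => S; rewrite !inE andbC //.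
have E2 : \sum_(S : {set A} | #|S| == t) #|[set b | S \subset R b]| <= t.-1 * 'C(#|A|, t).
  apply: (@leq_trans (\sum_(S : {set A} | #|S| == t) t.-1)).
    apply: leq_sum => S /eqP hS. move: (Hn S); rewrite hS eqxx /= -ltnNge.
    by case: (t) => [|t'] //=.
  by rewrite sum_nat_cond_const card_draws mulnC.
have E3 : #|B| * 'C(K, t) <= \sum_(b : B) 'C(#|R b|, t).
  rewrite -sum_nat_const; apply: leq_sum => b _; exact: leq_bin2l.
by move: (leq_trans Hlt (leq_trans E3 (leq_trans (eq_leq (esym E1)) E2))); rewrite ltnn.
Qed.

Lemma arrow (n t K s : nat) : t.-1 * 'C(n + K, t) < s * 'C(K, t) ->
  IR_le (Ktt_rel t) (star_rel n) (n + K + s).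
Proof.
set N := n + K => Hc.
pose eF : rel 'I_(N + s) := fun x y => (x < N) != (y < N).
exists eF; split.
  split; first by move=> x y; rewrite /eF eq_sym.
  by move=> x; rewrite /eF eqxx.
move=> col Hsym.
pose blue (b : 'I_s) := [set a : 'I_N | ~~ col (rshift N b) (lshift s a)].
have lsh_lt (a : 'I_N) : (lshift s a < N) = true by rewrite /= ltn_ord.
have rsh_lt (b : 'I_s) : (rshift N b < N) = false by rewrite /= ltnNge leq_addr.
case: (boolP [exists b, n <= #|blue b|]).
  case/existsP=> b hb; right.
  exists (fun x => match x with None => rshift N b
             | Some i => lshift s (enum_val (widen_ord hb i)) end).
  split; last split.
  - move=> [x|] [y|] //=.
    + by move=> /lshift_inj /enum_val_inj /(congr1 val) /= /val_inj ->.
    + by move/(congr1 val) => /= h; move: (ltn_ord (enum_val (widen_ord hb x))); rewrite h ltnNge leq_addr.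
    + by move/(congr1 val) => /= h; move: (ltn_ord (enum_val (widen_ord hb y))); rewrite -h ltnNge leq_addr.
  - by move=> [x|] [y|]; rewrite /eF /= ?lsh_lt ?rsh_lt.
  - move=> [x|] [y|] //= _.
    + by rewrite Hsym; move: (enum_valP (widen_ord hb x)); rewrite inE.
    + by move: (enum_valP (widen_ord hb y)); rewrite inE.
rewrite negb_exists => /forallP Hn.
pose red (b : 'I_s) := ~: blue b.
have HK b : K <= #|red b|.
  rewrite cardsCs card_ord /red setCK; move: (Hn b); rewrite -ltnNge => h.
  rewrite leq_subRL; first by rewrite leq_add2r ltnW.
  by rewrite /N (leq_trans (ltnW h)) ?leq_addr.
have Hc' : t.-1 * 'C(#|'I_N|, t) < #|'I_s| * 'C(K, t) by rewrite !card_ord.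
have [S [hS hT]] := kst HK Hc'.
left.
exists (fun x => match x with
   | inl i => lshift s (enum_val (cast_ord (esym hS) i))
   | inr j => rshift N (enum_val (widen_ord hT j)) end).
split; last split.
- move=> [x|x] [y|y] //=.
  + by move=> /lshift_inj /enum_val_inj /(congr1 val) /= /val_inj ->.
  + by move/(congr1 val) => /= h; move: (ltn_ord (enum_val (cast_ord (esym hS) x))); rewrite h ltnNge leq_addr.
  + by move/(congr1 val) => /= h; move: (ltn_ord (enum_val (cast_ord (esym hS) y))); rewrite -h ltnNge leq_addr.
  + by move=> /rshift_inj /enum_val_inj /(congr1 val) /= /val_inj ->.
- by move=> [x|x] [y|y]; rewrite /eF /= ?lsh_lt ?rsh_lt.
- move=> [x|x] [y|y] //= _.
  + move: (enum_valP (widen_ord hT y)); rewrite inE => /subsetP /(_ _ (enum_valP (cast_ord (esym hS) x))).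
    by rewrite !inE negbK Hsym.
  + move: (enum_valP (widen_ord hT x)); rewrite inE => /subsetP /(_ _ (enum_valP (cast_ord (esym hS) y))).
    by rewrite !inE negbK.
Qed.


Lemma root_ex e n : 0 < e -> exists r, r ^ e <= n < r.+1 ^ e.
Proof.
move=> he; elim: n => [|n [r /andP[h1 h2]]]; first by exists 0; rewrite exp0n ?exp1n.
case: (ltngtP n.+1 (r.+1 ^ e)) => h3.
- by exists r; rewrite h3 (leq_trans h1).
- by move: (leq_ltn_trans h2 h3); rewrite ltnn.
- exists r.+1; rewrite h3 leqnn /= ltn_exp2r //.
Qed.

Definition Cst t := t.+1 + 4^t + t * 4^t.

Lemma main_nat t n : 1 < t -> 0 < n -> exists r m, 0 < r /\ r^(2*t) <= n /\
  IR_le (Ktt_rel t) (star_rel n) m /\ m <= n + Cst t * r^((2*t).-1).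
Proof.
move=> ht hn.
set e := (2*t).-1.
have he : e.+1 = 2 * t by rewrite /e prednK // muln_gt0 /= ltnW.
have [r /andP[h1 h2]] := root_ex n (ltn0Sn e).
rewrite he in h1 h2.
have rpos : 0 < r.
  case: r h1 h2 => // _; rewrite exp1n => h; by move: (leq_trans hn h).
set D := r.+1 ^ e.
set K := D + t.
set s := t.-1 * (r + 3) ^ t + 1.
exists r, (n + K + s); split => //; split => //; split.
  apply: arrow.
  have tD : t <= D.
    apply: ltnW; apply: (leq_trans (ltn_expl t (ltnSn 1))).
    apply: (@leq_trans (2 ^ e)); first by apply: leq_pexp2l => //; rewrite /e; lia.
    by apply: expn_mono.
  have nD : n + K <= (r + 3) * D.
    have : n < r.+1 * D by rewrite /D -expnS he.
    rewrite /K; nia.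
  rewrite -(ltn_pmul2r (fact_gt0 t)) -!mulnA !bin_ffact.
  apply: (@leq_ltn_trans (t.-1 * (n + K) ^ t)); first by rewrite leq_mul2l ffact_ub orbT.
  apply: (@leq_trans (s * D ^ t)); last first.
    rewrite leq_mul2l; apply/orP; right; apply: leq_trans (ffact_lb _ _).
    by apply: expn_mono; rewrite /K; lia.
  have : (n + K) ^ t <= (r + 3) ^ t * D ^ t by rewrite -expnMn; apply: expn_mono.
  have : 0 < D ^ t by rewrite expn_gt0 /D expn_gt0.
  rewrite /s; nia.
have X1 : 0 < r ^ e by rewrite expn_gt0 rpos.
have X2 : D <= 4 ^ t * r ^ e.
  apply: (@leq_trans ((2 * r) ^ e)); first by apply: expn_mono; lia.
  rewrite expnMn leq_mul2r; apply/orP; right.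
  rewrite (_ : 4 = 2 ^ 2) // -expnM; apply: leq_pexp2l => //; rewrite /e; lia.
have X3 : (r + 3) ^ t <= 4 ^ t * r ^ e.
  apply: (@leq_trans ((4 * r) ^ t)); first by apply: expn_mono; lia.
  rewrite expnMn leq_mul2l; apply/orP; right; apply: leq_pexp2l => //; rewrite /e; lia.
rewrite /Cst /K /s; nia.
Qed.
From Stdlib Require Import Reals Lra.

Lemma INR_addn a b : INR (a + b) = (INR a + INR b)%R.
Proof. by rewrite -plusE plus_INR. Qed.
Lemma INR_muln a b : INR (a * b) = (INR a * INR b)%R.
Proof. by rewrite -multE mult_INR. Qed.
Lemma INR_expn a b : INR (expn a b) = (INR a ^ b)%R.
Proof. elim: b => [|b IH]; first by rewrite expn0. by rewrite expnS INR_muln IH. Qed.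
Lemma INR_leq a b : a <= b -> (INR a <= INR b)%R.
Proof. by move/leP; apply: le_INR. Qed.

Lemma rpow_bound (n r t e : nat) : 0 < r -> 0 < t -> e.+1 = 2 * t -> expn r (2 * t) <= n ->
  (INR (expn r e) <= Rpower (INR n) (1 - 1 / (2 * INR t)))%R.
Proof.
move=> hr ht he hn.
have rpos : (0 < INR r)%R by apply: lt_0_INR; apply/ltP.
have tpos : (0 < INR t)%R by apply: lt_0_INR; apply/ltP.
have HE : INR e = (INR (2 * t) * (1 - 1 / (2 * INR t)))%R.
  have := congr1 INR he; rewrite S_INR ?INR_muln ?mult_INR /= => h.
  rewrite ?INR_muln ?mult_INR /=; field_simplify; lra.
rewrite INR_expn -Rpower_pow // HE -Rpower_mult Rpower_pow // -INR_expn.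
apply: Rle_Rpower_l.
  have h1 : (1 <= INR t)%R by apply: (INR_leq (a:=1)) ht.
  have h2 : (1 / (2 * INR t) <= 1)%R.
    apply: (Rmult_le_reg_r (2 * INR t)); first lra.
    field_simplify; lra.
  lra.
split; last exact: INR_leq.
by apply: lt_0_INR; apply/ltP; rewrite expn_gt0 hr.
Qed.

Theorem lemma4 (t : nat) (ht : (2 <= t)%N) :
  exists (c : R) (n0 : nat), (0 < c)%R /\
    forall n : nat, (n0 < n)%N ->
      exists m : nat, IR_le (Ktt_rel t) (star_rel n) m /\
        (INR m <= INR n + c * Rpower (INR n) (1 - 1 / (2 * INR t)))%R.
Proof.
exists (INR (Cst t)), 0%N; split.
  by apply: lt_0_INR; apply/ltP; rewrite /Cst.
move=> n hn.
have [r [m [rpos [hr [HIR Hm]]]]] := main_nat ht hn.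
exists m; split => //.
apply: Rle_trans (INR_leq Hm) _.
rewrite INR_addn INR_muln.
apply: Rplus_le_compat_l; apply: Rmult_le_compat_l; first exact: pos_INR.
apply: (rpow_bound (r:=r)) => //; first exact: ltnW.
by rewrite prednK // muln_gt0 /= ltnW.
Qed.
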